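(* There is an absolute constant $C$ such that for all integers $n\ge1$ and $1\le d\le n$, every $r\in\{0,1,\dots,d-1\}$ and every $\alpha\in(0,1)$, $$\Big|\sum_{\substack{0\le l\le n\\ l\equiv r \ (\mathrm{mod}\ d)}}\binom nl\alpha^l(1-\alpha)^{n-l}-\frac1d\Big|\le \frac{C}{\sqrt{\alpha(1-\alpha)n}}.$$ *)

(* Defs.v *)
From Stdlib Require Import Reals Lra Lia Arith List.
Open Scope R_scope.

Definition binom_residue_sum (n d r : nat) (a : R) : R :=
  sum_f_R0 (fun l => if Nat.eqb (l mod d) r
                     then Binomial.C n l * a ^ l * (1 - a) ^ (n - l)
                     else 0) n.

(* Main.v *)
From Stdlib Require Import Reals Lra Lia Arith.
Open Scope R_scope.
Require Import Defs.
Definition B (a : R) (n k : nat) : R := C n k * a ^ k * (1 - a) ^ (n - k).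

Lemma C_ge0 n k : 0 <= C n k.
Proof.
  unfold C. apply Rmult_le_pos. apply pos_INR.
  apply Rlt_le, Rinv_0_lt_compat, Rmult_lt_0_compat; apply lt_0_INR, Factorial.lt_O_fact.
Qed.

Lemma B_ge0 a n k : 0 <= a <= 1 -> 0 <= B a n k.
Proof.
  intros H. unfold B. apply Rmult_le_pos; [apply Rmult_le_pos; [apply C_ge0|apply pow_le; lra]|apply pow_le; lra].
Qed.

Lemma B_sum a n : sum_f_R0 (B a n) n = 1.
Proof.
  unfold B. rewrite <- binomial. replace (a + (1 - a)) with 1 by ring. apply pow1.
Qed.

Lemma C_succ n k : (k <= n)%nat -> INR (S k) * C (S n) (S k) = INR (S n) * C n k.
Proof.
  intros Hk. rewrite pascal_step3 by lia. rewrite pascal_step2 by lia.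
  assert (INR (S n - k) <> 0) by (apply not_0_INR; lia).
  assert (INR (S k) <> 0) by (apply not_0_INR; lia).
  field. split; auto.
Qed.

Lemma B_succ a n k : (k <= n)%nat ->
  INR (S k) * B a (S n) (S k) = INR (S n) * a * B a n k.
Proof.
  intros Hk. unfold B. replace (S n - S k)%nat with (n - k)%nat by lia.
  transitivity ((INR (S k) * C (S n) (S k)) * a ^ S k * (1 - a) ^ (n - k)).
  { ring. }
  rewrite (C_succ n k Hk). simpl. ring.
Qed.

Lemma B_mean a n : sum_f_R0 (fun k => INR k * B a n k) n = INR n * a.
Proof.
  destruct n as [|n].
  - simpl. ring.
  - rewrite decomp_sum by lia. simpl pred.
    rewrite (sum_eq _ (fun i => B a n i * (INR (S n) * a))).
    + rewrite <- scal_sum, B_sum. simpl INR at 1. ring.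
    + intros i Hi. rewrite B_succ by lia. ring.
Qed.

Lemma B_sq a n : sum_f_R0 (fun k => INR k * INR k * B a (S n) k) (S n)
   = INR (S n) * a * (INR n * a + 1).
Proof.
  rewrite decomp_sum by lia. simpl pred.
  rewrite (sum_eq _ (fun i => INR i * B a n i * (INR (S n) * a) + B a n i * (INR (S n) * a))).
  - rewrite sum_plus, <- !scal_sum, B_mean, B_sum. simpl INR at 1. ring.
  - intros i Hi. rewrite Rmult_assoc, B_succ by lia. rewrite S_INR. ring.
Qed.

Lemma B_var a m : sum_f_R0 (fun k => B a m k * (INR k - INR m * a)^2) m
   = INR m * a * (1 - a).
Proof.
  destruct m as [|n].
  - simpl. ring.
  - rewrite (sum_eq _ (fun k => (INR k * INR k * B a (S n) k + INR k * B a (S n) k * (-2 * INR (S n) * a))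
        + B a (S n) k * (INR (S n) * a)^2)).
    + rewrite !sum_plus, <- !scal_sum, B_sq, B_mean, B_sum. rewrite S_INR. ring.
    + intros i _. ring.
Qed.
Definition ind (d r l : nat) : R := if Nat.eqb (l mod d) r then 1 else 0.

Fixpoint cnt (d r l : nat) : nat :=
  match l with O => O | S l' => (cnt d r l' + (if Nat.eqb (l' mod d) r then 1 else 0))%nat end.

Lemma cnt_bounds d r l : (1 <= d)%nat -> (r < d)%nat ->
  (cnt d r l * d <= l + d - 1 - r)%nat /\ (l + d - 1 - r < (cnt d r l + 1) * d)%nat.
Proof.
  intros Hd Hr. induction l as [|l IH]; simpl.
  - split; lia.
  - destruct IH as [H1 H2].
    pose proof (Nat.div_mod_eq l d) as E. pose proof (Nat.mod_upper_bound l d ltac:(lia)) as U.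
    set (q := (l / d)%nat) in *. set (c := cnt d r l) in *.
    destruct (Nat.eqb_spec (l mod d) r) as [e|e]; set (s := (l mod d)%nat) in *.
    + assert (c = q) by nia. subst c. split; nia.
    + split; [lia|].
      destruct (Nat.lt_trichotomy c q) as [h|[h|h]]; nia.
Qed.

Fixpoint G (d r l : nat) : R :=
  match l with O => 0 | S l' => G d r l' + (ind d r l' - / INR d) end.

Lemma G_eq d r l : (1 <= d)%nat -> G d r l = INR (cnt d r l) - INR l / INR d.
Proof.
  intros Hd. assert (INR d <> 0) by (apply not_0_INR; lia).
  induction l as [|l IH]; simpl G; simpl cnt.
  - simpl. field. auto.
  - rewrite IH, plus_INR, S_INR. unfold ind. destruct (Nat.eqb (l mod d) r); simpl; field; auto.
Qed.

Lemma G_bound d r l : (1 <= d)%nat -> (r < d)%nat -> Rabs (G d r l) <= 1.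
Proof.
  intros Hd Hr. rewrite G_eq by auto.
  destruct (cnt_bounds d r l Hd Hr) as [H1 H2].
  assert (A1 : (cnt d r l * d < l + d)%nat) by lia.
  assert (A2 : (l < cnt d r l * d + d)%nat) by nia.
  apply lt_INR in A1. apply lt_INR in A2. rewrite plus_INR, mult_INR in A1, A2.
  assert (0 < INR d) by (apply lt_0_INR; lia).
  apply Rabs_le. split.
  - apply (Rmult_le_reg_r (INR d)); auto. unfold Rdiv.
    rewrite Rmult_minus_distr_r, Rmult_assoc, Rinv_l by lra. lra.
  - apply (Rmult_le_reg_r (INR d)); auto. unfold Rdiv.
    rewrite Rmult_minus_distr_r, Rmult_assoc, Rinv_l by lra. lra.
Qed.

Lemma sum_by_parts d r (p : nat -> R) m :
  sum_f_R0 (fun l => p l * (ind d r l - / INR d)) m =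
  sum_f_R0 (fun l => G d r (S l) * (p l - p (S l))) m + G d r (S m) * p (S m).
Proof.
  induction m as [|m IH]; simpl sum_f_R0.
  - simpl G. ring.
  - rewrite IH. simpl G. ring.
Qed.


Definition pp (a : R) (n l : nat) : R := if Nat.leb l n then B a n l else 0.

Lemma B_next a n l : (l < n)%nat ->
  INR (S l) * B a n (S l) * (1 - a) = INR (n - l) * a * B a n l.
Proof.
  intros Hl. unfold B. rewrite pascal_step3 by auto.
  replace (n - l)%nat with (S (n - S l)) by lia.
  assert (INR (S l) <> 0) by (apply not_0_INR; lia).
  simpl. field. auto.
Qed.

Lemma pp_diff a n l : 0 < a < 1 -> (l <= n)%nat ->
  pp a n l - pp a n (S l) =
  B a (S n) (S l) * (INR (S l) - INR (S n) * a) / (INR (S n) * a * (1 - a)).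
Proof.
  intros Ha Hl. unfold pp.
  assert (E1 : Nat.leb l n = true) by (apply Nat.leb_le; auto). rewrite E1.
  assert (INR (S l) <> 0) by (apply not_0_INR; lia).
  assert (INR (S n) <> 0) by (apply not_0_INR; lia).
  assert (Y : B a (S n) (S l) = INR (S n) * a * B a n l / INR (S l)).
  { rewrite <- (B_succ a n l Hl). field. auto. }
  rewrite Y.
  destruct (Nat.eq_dec l n) as [->|Hne].
  - assert (E2 : Nat.leb (S n) n = false) by (apply Nat.leb_gt; lia). rewrite E2.
    field. repeat split; auto; lra.
  - assert (E2 : Nat.leb (S l) n = true) by (apply Nat.leb_le; lia). rewrite E2.
    assert (Z : B a n (S l) = INR (n - l) * a * B a n l / (INR (S l) * (1 - a))).
    { rewrite <- (B_next a n l) by lia. field. split; auto; lra. }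
    rewrite Z, minus_INR by lia. rewrite !S_INR. field.
    repeat split; try lra; rewrite <- S_INR; auto.
Qed.

Lemma amgm x s : 0 < s -> Rabs x <= (x ^ 2 / s + s) / 2.
Proof.
  intros Hs. apply (Rmult_le_reg_l (2 * s)); [lra|].
  replace (2 * s * ((x ^ 2 / s + s) / 2)) with (x ^ 2 + s ^ 2) by (field; lra).
  pose proof (pow2_ge_0 (Rabs x - s)). rewrite <- (pow2_abs x). nra.
Qed.

Lemma main_bound a n : 0 < a < 1 ->
  sum_f_R0 (fun l => Rabs (pp a n l - pp a n (S l))) n <= / sqrt (INR (S n) * a * (1 - a)).
Proof.
  intros Ha. set (V := INR (S n) * a * (1 - a)).
  assert (HN : 0 < INR (S n)) by (apply lt_0_INR; lia).
  assert (HV : 0 < V) by (unfold V; apply Rmult_lt_0_compat; [apply Rmult_lt_0_compat|]; lra).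
  set (s := sqrt V).
  assert (Hs : 0 < s) by (apply sqrt_lt_R0; auto).
  assert (Hss : s * s = V) by (apply sqrt_sqrt; lra).
  set (f := fun k => B a (S n) k * ((INR k - INR (S n) * a) ^ 2 / s + s) / 2 / V).
  apply Rle_trans with (sum_f_R0 (fun l => f (S l)) n).
  - apply sum_Rle. intros l Hl. rewrite pp_diff by auto. fold V. unfold f.
    pose proof (B_ge0 a (S n) (S l) ltac:(lra)).
    set (x := INR (S l) - INR (S n) * a).
    set (Bv := B a (S n) (S l)) in *.
    pose proof (amgm x s Hs) as A.
    assert (0 <= / V) by (left; apply Rinv_0_lt_compat; auto).
    unfold Rdiv at 1. rewrite !Rabs_mult, Rabs_inv, (Rabs_right V), (Rabs_right Bv) by lra.
    replace (Bv * ((x ^ 2 / s + s)) / 2 / V) with (Bv * ((x ^ 2 / s + s) / 2) * / V) by (unfold Rdiv; ring).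
    apply Rmult_le_compat_r; auto. apply Rmult_le_compat_l; auto.
  - assert (Hsum : sum_f_R0 f (S n) = / s).
    { unfold f.
      rewrite (sum_eq _ (fun k => B a (S n) k * (INR k - INR (S n) * a) ^ 2 * / (2 * s * V)
                              + B a (S n) k * (s / (2 * V)))).
      2:{ intros i _. field. split; lra. }
      rewrite sum_plus, <- !scal_sum, B_var, B_sum. fold V.
      field_simplify; [|lra|lra]. rewrite <- Hss. field. lra. }
    rewrite <- Hsum. rewrite (decomp_sum f (S n)) by lia. simpl pred.
    assert (0 <= f 0%nat).
    { unfold f. pose proof (B_ge0 a (S n) 0 ltac:(lra)).
      pose proof (pow2_ge_0 (INR 0 - INR (S n) * a)).
      apply Rmult_le_pos; [|left; apply Rinv_0_lt_compat; auto].
      apply Rmult_le_pos; [|lra]. apply Rmult_le_pos; auto.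
      assert (0 <= (INR 0 - INR (S n) * a) ^ 2 / s) by (apply Rmult_le_pos; [auto|left; apply Rinv_0_lt_compat; auto]). lra. }
    lra.
Qed.

Theorem lemma1 :
  exists C : R,
    forall (n d r : nat) (alpha : R),
      (1 <= n)%nat -> (1 <= d)%nat -> (d <= n)%nat -> (r < d)%nat ->
      0 < alpha < 1 ->
      Rabs (binom_residue_sum n d r alpha - / INR d)
        <= C / sqrt (alpha * (1 - alpha) * INR n).
Proof.
  exists 1. intros n d r a Hn Hd Hdn Hr Ha.
  assert (Heq : binom_residue_sum n d r a - / INR d =
     sum_f_R0 (fun l => pp a n l * (ind d r l - / INR d)) n).
  { unfold binom_residue_sum.
    rewrite <- (Rmult_1_l (/ INR d)) at 1. rewrite <- (B_sum a n) at 1.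
    rewrite Rmult_comm, scal_sum, <- minus_sum. apply sum_eq. intros i Hi.
    unfold pp, ind. rewrite (proj2 (Nat.leb_le i n) Hi). unfold B.
    destruct (Nat.eqb (i mod d) r); ring. }
  rewrite Heq, sum_by_parts.
  assert (Hend : pp a n (S n) = 0).
  { unfold pp. rewrite (proj2 (Nat.leb_gt (S n) n) ltac:(lia)). auto. }
  rewrite Hend, Rmult_0_r, Rplus_0_r.
  eapply Rle_trans; [apply Rsum_abs|].
  eapply Rle_trans.
  { apply sum_Rle with (Bn := fun l => Rabs (pp a n l - pp a n (S l))).
    intros l _. rewrite Rabs_mult.
    pose proof (G_bound d r (S l) Hd Hr). pose proof (Rabs_pos (pp a n l - pp a n (S l))).
    nra. }
  eapply Rle_trans; [apply main_bound; auto|].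
  assert (HnR : 0 < INR n) by (apply lt_0_INR; lia).
  assert (0 < a * (1 - a) * INR n) by (apply Rmult_lt_0_compat; [apply Rmult_lt_0_compat|]; lra).
  unfold Rdiv. rewrite Rmult_1_l. apply Rinv_le_contravar.
  - apply sqrt_lt_R0. auto.
  - apply sqrt_le_1_alt. rewrite S_INR. nra.
Qed.
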